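(* Let $\mathcal{A}$ be a GVA over an infinite alphabet $\Sigma$ with $n$ variables and with set of constants $\Sigma_{\mathcal{A}}=\{c_1,\ldots,c_k\}$. Let $a_1,\ldots,a_n$ be pairwise distinct letters of $\Sigma\setminus\Sigma_{\mathcal{A}}$ and let $\boldsymbol{\Sigma}=\{a_1,\ldots,a_n,c_1,\ldots,c_k\}$. Then $L(\mathcal{A})\neq\emptyset$ if and only if $L(\mathcal{A})\cap\boldsymbol{\Sigma}^{\star}\neq\emptyset$.
   Context: A guard over a set of variables $\mathcal{X}$ (disjoint from $\Sigma$) is built by the grammar $g ::= \mathit{true} \mid \alpha=\beta \mid \alpha\neq\beta \mid g\wedge g$ with $\alpha,\beta\in\Sigma\cup\mathcal{X}$. A GVA is a tuple $\mathcal{A}=\langle\Sigma,\mathcal{X},Q,Q_0,\delta,F,\kappa\rangle$ where $\mathcal{X}$ is a finite set of variables (its number of variables is $|\mathcal{X}|$), $Q$ a finite set of states, $Q_0\subseteq Q$ the initial states, $F\subseteq Q$ the accepting states, $\delta$ a finite set of transitions $q\xrightarrow{\alpha,g}q'$ with $q,q'\in Q$, $\alpha\in\Sigma\cup\mathcal{X}\cup\{\varepsilon\}$ and $g$ a guard, and $\kappa:\mathcal{X}\to 2^{Q}$ the refreshing function ($\kappa(x)$ is the set of states in which $x$ is freed). The constants $\Sigma_{\mathcal{A}}$ of $\mathcal{A}$ are the (finitely many) letters of $\Sigma$ occurring in its transitions (labels or guards). A configuration is a pair $(\sigma,q)$ with $q\in Q$ and $\sigma$ a partial map $\mathcal{X}\to\Sigma$.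 There is a step $(\sigma,q)\xrightarrow{a}(\sigma',q')$, $a\in\Sigma\cup\{\varepsilon\}$, if there is a transition $q\xrightarrow{\alpha,g}q'$ and a map $\gamma$ from the variables occurring in $\alpha$ or $g$ that are not in $\mathrm{dom}(\sigma)$ to $\Sigma$ such that, with $\rho=\sigma\uplus\gamma$ (extended to be the identity on letters), $\rho$ satisfies $g$, $a=\rho(\alpha)$ if $\alpha\neq\varepsilon$ and $a=\varepsilon$ if $\alpha=\varepsilon$, and $\sigma'$ is the restriction of $\rho$ to $\{x\in\mathrm{dom}(\rho) : q'\notin\kappa(x)\}$. A word $w\in\Sigma^{\star}$ is accepted if there is a sequence of steps from $(\emptyset,q_0)$ with $q_0\in Q_0$ to some $(\sigma,q_f)$ with $q_f\in F$ whose labels concatenate to $w$; $L(\mathcal{A})$ is the set of accepted words. *)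

(* Defs.v *)
From mathcomp Require Import all_boot.
From Stdlib Require List.
Set Implicit Arguments. Unset Strict Implicit. Unset Printing Implicit Defensive.

Section GVA.
Variables (Sigma : eqType) (X : finType).

Inductive atom := ALet of Sigma | AVar of X.

Inductive guard :=
| GTrue
| GEq of atom & atom
| GNeq of atom & atom
| GAnd of guard & guard.

(* a transition q --alpha,g--> q'; label None stands for epsilon *)
Record trans (Q : Type) := Trans {
  tr_src : Q; tr_lab : option atom; tr_guard : guard; tr_dst : Q }.

Record GVA := MkGVA {
  gQ : finType;
  gQ0 : {set gQ};
  gdelta : seq (trans gQ);
  gF : {set gQ};
  gkappa : X -> {set gQ} }.

Definition atom_lets (u : atom) : seq Sigma :=
  if u is ALet c then [:: c] else [::].
Fixpoint guard_lets (g : guard) : seq Sigma :=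
  match g with
  | GTrue => [::]
  | GEq u v | GNeq u v => atom_lets u ++ atom_lets v
  | GAnd g1 g2 => guard_lets g1 ++ guard_lets g2
  end.
Definition consts (A : GVA) : seq Sigma :=
  flatten [seq (if tr_lab t is Some u then atom_lets u else [::])
               ++ guard_lets (tr_guard t) | t <- gdelta A].

Definition atom_occ (x : X) (u : atom) : bool :=
  if u is AVar y then y == x else false.
Fixpoint guard_occ (x : X) (g : guard) : bool :=
  match g with
  | GTrue => false
  | GEq u v | GNeq u v => atom_occ x u || atom_occ x v
  | GAnd g1 g2 => guard_occ x g1 || guard_occ x g2
  end.

Definition valuation := X -> option Sigma.

Definition eval_atom (rho : valuation) (u : atom) : option Sigma :=
  match u with ALet c => Some c | AVar x => rho x end.

Fixpoint sat (rho : valuation) (g : guard) : Prop :=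
  match g with
  | GTrue => True
  | GEq u v => exists b, eval_atom rho u = Some b /\ eval_atom rho v = Some b
  | GNeq u v => exists b c, [/\ eval_atom rho u = Some b,
                              eval_atom rho v = Some c & b <> c]
  | GAnd g1 g2 => sat rho g1 /\ sat rho g2
  end.

Definition config (A : GVA) := (valuation * gQ A)%type.

(* one step (sigma,q) --a--> (sigma',q'), a = None meaning epsilon.
   rho = sigma (+) gamma, where gamma is defined exactly on the variables
   occurring in alpha or g that are not in dom sigma. *)
Definition step (A : GVA) (c : config A) (a : option Sigma) (c' : config A) : Prop :=
  exists t, [/\ List.In t (gdelta A), tr_src t = c.2, tr_dst t = c'.2 &
  exists rho : valuation,
    [/\ (forall x, c.1 x <> None -> rho x = c.1 x),
        (forall x, c.1 x = None ->
           (rho x <> None <->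
            (match tr_lab t with Some u => atom_occ x u | None => false end
             || guard_occ x (tr_guard t)))),
        sat rho (tr_guard t),
        (match tr_lab t with
         | Some u => a = eval_atom rho u /\ a <> None
         | None => a = None end) &
        (forall x, c'.1 x = if c'.2 \in gkappa A x then None else rho x)]].

Definition oseq (a : option Sigma) : seq Sigma :=
  if a is Some b then [:: b] else [::].

Inductive run (A : GVA) : config A -> seq Sigma -> config A -> Prop :=
| run_nil c : run c [::] c
| run_step c a c1 w c2 : step c a c1 -> run c1 w c2 -> run c (oseq a ++ w) c2.

Definition empty_val : valuation := fun _ => None.

Definition accepts (A : GVA) (w : seq Sigma) : Prop :=
  exists q0, q0 \in gQ0 A /\
  exists (s : valuation) (qf : gQ A), qf \in gF A /\ run (empty_val, q0) w (s, qf).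

End GVA.

(* Main.v *)
Require Import Defs.
From mathcomp Require Import all_boot.
From mathcomp Require Import zify.
Set Implicit Arguments. Unset Strict Implicit. Unset Printing Implicit Defensive.

Section Pf.
Variables (Sigma : eqType) (X : finType) (A : GVA Sigma X).
Variable a : 'I_#|X| -> Sigma.
Hypothesis a_inj : injective a.
Hypothesis a_fresh : forall i, a i \notin consts A.

Definition inr (s : valuation Sigma X) (b : Sigma) : Prop := exists x, s x = Some b.

Section Fp.
Variables (s rho : valuation Sigma X) (f : Sigma -> Sigma).
Hypothesis ext : forall x b, s x = Some b -> rho x = Some b.
Hypothesis Hfa : forall b, inr s b -> b \notin consts A -> exists i, f b = a i.
Hypothesis Hinj : forall b1 b2, inr s b1 -> inr s b2 -> f b1 = f b2 -> b1 = b2.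

Definition inS b := [exists z, s z == Some b].
Definition rep b := [pick y | rho y == Some b].
Definition Sset := [set i : 'I_#|X| | [exists z, omap f (s z) == Some (a i)]].
Definition Nset := [set y | if rho y is Some b then
   (b \notin consts A) && ~~ inS b && (rep b == Some y) else false].
Definition Ls := [seq a i | i <- enum (~: Sset)].
Definition fp b := if b \in consts A then b else if inS b then f b else
   if rep b is Some y then nth b Ls (index y (enum Nset)) else b.

Lemma card_N : #|Nset| <= #|~: Sset|.
Proof.
set Z := [set z | [exists i, omap f (s z) == Some (a i)]].
have h1 : #|Sset| <= #|Z|.
  pose idx z := [pick i | omap f (s z) == Some (a i)].
  have -> : #|Sset| = #|[set Some i | i in Sset]|.
    by rewrite card_imset //; exact: Some_inj.
  apply: leq_trans (leq_imset_card idx Z).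
  apply: subset_leq_card; apply/subsetP => o /imsetP [i iS ->].
  move: iS; rewrite inE => /existsP [z /eqP hz].
  apply/imsetP; exists z; first by rewrite inE; apply/existsP; exists i; apply/eqP.
  rewrite /idx; case: pickP => [j /eqP hj|/(_ i)]; last by rewrite hz eqxx.
  by congr Some; apply: a_inj; move: hj; rewrite hz => -[].
have hNZ : Nset :&: Z = set0.
  apply/setP => z; rewrite !inE.
  case hz: (s z) => [c|] /=.
    have hinS : inS c by apply/existsP; exists z; rewrite hz.
    by rewrite (ext hz) /= hinS andbF.
  by apply/andP => -[_ /existsP [i]].
have h2 : #|Nset :|: Z| <= #|X| := max_card _.
move: h2; rewrite cardsU hNZ cards0 subn0 => h2.
have h3 := cardsC Sset; rewrite card_ord in h3.
lia.
Qed.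

Lemma fp_class b : (inr rho b \/ b \in consts A) ->
  [\/ b \in consts A /\ fp b = b,
      [/\ b \notin consts A, inr s b, fp b = f b & exists2 i, i \in Sset & fp b = a i] |
      [/\ b \notin consts A, ~ inr s b & exists y, [/\ y \in Nset, rho y = Some b,
          (forall d, fp b = nth d Ls (index y (enum Nset))) &
          exists2 i, i \in ~: Sset & fp b = a i]]].
Proof.
move=> hD; rewrite /fp; case: ifP => hc; first by constructor 1.
case hS: (inS b).
  move: (hS) => /existsP [z /eqP hz].
  have hr : inr s b by exists z.
  have [i hi] := Hfa hr (negbT hc).
  constructor 2; split => //.
  exists i => //; rewrite inE; apply/existsP; exists z; by rewrite hz /= hi.
have hrho : inr rho b by case: hD => //; rewrite hc.
have [y hy hrep] : exists2 y, rho y = Some b & rep b = Some y.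
  rewrite /rep; case: pickP => [y /eqP hy|hn]; first by exists y.
  by case: hrho => x hx; move: (hn x); rewrite hx eqxx.
rewrite hrep.
have yN : y \in Nset by rewrite inE hy hc hS hrep eqxx.
have hlt : index y (enum Nset) < size Ls.
  rewrite size_map -!cardE; apply: leq_trans (card_N).
  by rewrite cardE index_mem mem_enum.
constructor 3; split; first by [].
  by move=> [z hz]; move: hS; have -> : inS b by apply/existsP; exists z; rewrite hz.
exists y; split; [exact: yN | exact: hy | by move=> d; apply: set_nth_default | ].
have hm : nth b Ls (index y (enum Nset)) \in Ls := mem_nth b hlt.
case/mapP: hm => i; rewrite mem_enum => hi E.
by exists i.
Qed.
Lemma fp_inj b1 b2 : (inr rho b1 \/ b1 \in consts A) -> (inr rho b2 \/ b2 \in consts A) ->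
  fp b1 = fp b2 -> b1 = b2.
Proof.
have ca : forall b i, b \in consts A -> b = a i -> False.
  by move=> b i hb e; move: (a_fresh i); rewrite -e hb.
move=> /fp_class [[h1 e1]|[h1 r1 e1 [i1 s1 a1]]|[h1 r1 [y1 [N1 p1 n1 [i1 s1 a1]]]]]
       /fp_class [[h2 e2]|[h2 r2 e2 [i2 s2 a2]]|[h2 r2 [y2 [N2 p2 n2 [i2 s2 a2]]]]].
- by rewrite e1 e2.
- by rewrite e1 a2 => E; case: (ca _ _ h1 E).
- by rewrite e1 a2 => E; case: (ca _ _ h1 E).
- by rewrite e2 a1 => E; case: (ca _ _ h2 (esym E)).
- by rewrite e1 e2; apply: Hinj.
- by rewrite a1 a2 => /a_inj E; move: s2; rewrite -E inE s1.
- by rewrite e2 a1 => E; case: (ca _ _ h2 (esym E)).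
- by rewrite a1 a2 => /a_inj E; move: s1; rewrite E inE s2.
- rewrite (n1 b1) (n2 b1) => /eqP.
  have u : uniq Ls by rewrite map_inj_uniq // enum_uniq.
  have l : forall y, y \in Nset -> index y (enum Nset) < size Ls.
    move=> y yN; rewrite size_map -!cardE; apply: leq_trans (card_N).
    by rewrite cardE index_mem mem_enum.
  rewrite nth_uniq ?l // => /eqP E; have ey : y1 = y2 by apply: (index_inj y1) E; rewrite mem_enum.
  by move: p1; rewrite ey p2 => -[].
Qed.
End Fp.

Definition good (b : Sigma) := b \in [seq a i | i <- enum 'I_#|X|] ++ consts A.

Definition Rel (s s' : valuation Sigma X) : Prop :=
  exists f : Sigma -> Sigma,
   [/\ forall x, s' x = omap f (s x),
       forall b1 b2, inr s b1 -> inr s b2 -> f b1 = f b2 -> b1 = b2,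
       forall b, inr s b -> b \in consts A -> f b = b &
       forall b, inr s b -> b \notin consts A -> exists i, f b = a i].

Definition tlets (t : trans Sigma X (gQ A)) :=
  (if tr_lab t is Some u then atom_lets u else [::]) ++ guard_lets (tr_guard t).

Lemma in_consts t : List.In t (gdelta A) -> forall c, c \in tlets t -> c \in consts A.
Proof.
rewrite /consts; elim: (gdelta A) => //= t' l IH [<-|H] c Hc; rewrite mem_cat.
  by rewrite Hc.
by rewrite (IH H c Hc) orbT.
Qed.

Section Sim.
Variables (s rho : valuation Sigma X) (f : Sigma -> Sigma).
Hypothesis ext : forall x b, s x = Some b -> rho x = Some b.
Hypothesis Hfa : forall b, inr s b -> b \notin consts A -> exists i, f b = a i.
Hypothesis Hinj : forall b1 b2, inr s b1 -> inr s b2 -> f b1 = f b2 -> b1 = b2.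

Let F := fp s rho f.
Let rho' : valuation Sigma X := fun x => omap F (rho x).

Lemma eval_fp u : (forall c, c \in atom_lets u -> c \in consts A) ->
  eval_atom rho' u = omap F (eval_atom rho u).
Proof.
case: u => [c|x] //= H.
by rewrite /F /fp (H c (mem_head _ _)).
Qed.

Lemma eval_D u b : (forall c, c \in atom_lets u -> c \in consts A) ->
  eval_atom rho u = Some b -> inr rho b \/ b \in consts A.
Proof.
case: u => [c|x] /= H.
  by move=> [<-]; right; apply: H; apply: mem_head.
by move=> e; left; exists x.
Qed.

Lemma sat_fp g : (forall c, c \in guard_lets g -> c \in consts A) ->
  sat rho g -> sat rho' g.
Proof.
elim: g => [|u v|u v|g1 IH1 g2 IH2] /= Hc.
- done.
- have Hu : forall c, c \in atom_lets u -> c \in consts A.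
    by move=> c hc; apply: Hc; rewrite mem_cat hc.
  have Hv : forall c, c \in atom_lets v -> c \in consts A.
    by move=> c hc; apply: Hc; rewrite mem_cat hc orbT.
  move=> [b [e1 e2]]; exists (F b).
  by rewrite (eval_fp Hu) (eval_fp Hv) e1 e2.
- have Hu : forall c, c \in atom_lets u -> c \in consts A.
    by move=> c hc; apply: Hc; rewrite mem_cat hc.
  have Hv : forall c, c \in atom_lets v -> c \in consts A.
    by move=> c hc; apply: Hc; rewrite mem_cat hc orbT.
  move=> [b [c [e1 e2 ne]]]; exists (F b), (F c).
  rewrite (eval_fp Hu) (eval_fp Hv) e1 e2; split => // E; apply: ne.
  exact: (fp_inj ext Hfa Hinj (eval_D Hu e1) (eval_D Hv e2) E).
- move=> [h1 h2]; split.
    by apply: IH1 => // c hc; apply: Hc; rewrite mem_cat hc.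
  by apply: IH2 => // c hc; apply: Hc; rewrite mem_cat hc orbT.
Qed.

Lemma good_fp b : inr rho b \/ b \in consts A -> good (F b).
Proof.
rewrite /good /F mem_cat.
move=> /(fp_class ext Hfa) [[h1 e1]|[h1 r1 e1 [i1 s1 a1]]|[h1 r1 [y1 [N1 p1 n1 [i1 s1 a1]]]]].
- by rewrite e1 h1 orbT.
- by rewrite a1; apply/orP; left; apply/mapP; exists i1; rewrite ?mem_enum.
- by rewrite a1; apply/orP; left; apply/mapP; exists i1; rewrite ?mem_enum.
Qed.

End Sim.



Lemma step_sim (c c1 : config A) o s' : step c o c1 -> Rel c.1 s' ->
  exists o' s1', [/\ step ((s', c.2) : config A) o' ((s1', c1.2) : config A),
                     Rel c1.1 s1' & all good (oseq o')].
Proof.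
case: c c1 => [s q] [s1 q1] /= [t [Hin Hsrc Hdst [rho [H1 H2 Hsat Hlab H5]]]].
move=> [f [Hs' Hinj Hfix Hfa]]; simpl in *.
have ext : forall x b, s x = Some b -> rho x = Some b.
  by move=> x b e; rewrite H1 e.

have Hc := in_consts Hin.
pose F := fp s rho f.
pose rho' : valuation Sigma X := fun x => omap F (rho x).
exists (omap F o), (fun x => if q1 \in gkappa A x then None else rho' x).
split.
- exists t; split => //.
  exists rho'; split.
  + move=> x /=; rewrite Hs'; case e: (s x) => [b|] //= _.
    rewrite /rho' (ext _ _ e) /=; congr Some.
    rewrite /F /fp; case: ifP => hc; first by rewrite Hfix //; exists x.
    suff -> : inS s b by [].
    by apply/existsP; exists x; rewrite e.
  + move=> x /=; rewrite Hs'; case e: (s x) => //= _.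
    rewrite -(H2 x e) /rho'; case: (rho x) => [?|] /=; by split.
  + apply: (sat_fp ext Hfa Hinj) => // c hc; apply: Hc; by rewrite /tlets mem_cat hc orbT.
  + move: Hlab; case hl: (tr_lab t) => [u|] /=; last by move->.
    have Hu : forall c, c \in atom_lets u -> c \in consts A.
      by move=> c hc; apply: Hc; rewrite /tlets hl mem_cat hc.
    move=> [-> ne]; rewrite (eval_fp s rho f Hu); split => //.
    by case: (eval_atom rho u) ne.
  + by [].
- exists F; split.
  + by move=> x /=; rewrite H5; case: ifP.
  + move=> b1 b2 [x1 e1] [x2 e2]; apply: (fp_inj ext Hfa Hinj); left.
      by exists x1; move: e1; rewrite H5; case: ifP.
    by exists x2; move: e2; rewrite H5; case: ifP.
  + by move=> b _ hb; rewrite /F /fp hb.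
  + move=> b [x e] hb.
    have hr : inr rho b by exists x; move: e; rewrite H5; case: ifP.
    move: (fp_class ext Hfa (or_introl hr)) => [[h1 e1]|[h1 r1 e1 [i1 ss1 a1]]|[h1 r1 [y1 [N1 p1 n1 [i1 ss1 a1]]]]].
    * by move: hb; rewrite h1.
    * by exists i1.
    * by exists i1.
- move: Hlab; case hl: (tr_lab t) => [u|] /=; last by move->.
  have Hu : forall c, c \in atom_lets u -> c \in consts A.
    by move=> c hc; apply: Hc; rewrite /tlets hl mem_cat hc.
  move=> [-> _]; case e: (eval_atom rho u) => [b|] //=.
  by rewrite andbT; apply: (good_fp ext Hfa); apply: (eval_D Hu e).
Qed.


Lemma run_sim (c c2 : config A) w : run c w c2 -> forall s', Rel c.1 s' ->
  exists w' s2', run ((s', c.2) : config A) w' ((s2', c2.2) : config A) /\ all good w'.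
Proof.
elim=> {c w c2} [c|c o c1 w c2 Hst Hr IH] s' HR.
  by exists [::], s'; split => //; apply: run_nil.
have [o' [s1' [Hst' HR1 Hg]]] := step_sim Hst HR.
have [w' [s2' [Hr' Hg']]] := IH _ HR1.
exists (oseq o' ++ w'), s2'; split; first exact: run_step Hst' Hr'.
by rewrite all_cat Hg Hg'.
Qed.

End Pf.

Theorem mainTheorem4 (Sigma : eqType) (X : finType) (A : GVA Sigma X)
  (Sigma_infinite : forall s : seq Sigma, exists b, b \notin s)
  (a : 'I_#|X| -> Sigma)
  (a_inj : injective a)
  (a_fresh : forall i, a i \notin consts A) :
  (exists w, accepts A w) <->
  (exists w, accepts A w /\
     all (fun b => b \in [seq a i | i <- enum 'I_#|X|] ++ consts A) w).
Proof.
split; last by move=> [w [h _]]; exists w.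
move=> [w [q0 [q0in [s [qf [qfF hr]]]]]].
have HR : Rel A a (@empty_val Sigma X) (@empty_val Sigma X).
  exists id; split.
  - by [].
  - by move=> b1 b2 [x].
  - by move=> b [x].
  - by move=> b [x].
have [w' [s2' [hr' hg]]] := run_sim a_inj a_fresh hr HR.
exists w'; split; last exact: hg.
by exists q0; split => //; exists s2', qf; split.
Qed.
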